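(* Let $\mathbf{P_0},\mathbf{P_1}$ be $n\times n$ transition probability matrices of irreducible and aperiodic Markov chains on $n$ states, let $\mathbf{P_t}=(1-t)\mathbf{P_0}+t\mathbf{P_1}$ for $t\in[0,1]$, and let $\pi_t$ be the stationary distribution of $\mathbf{P_t}$. Let $T\in\mathbb{N}$. Then for every integer $1\le k\le T$, $$\|\pi_0\mathbf{P_{1/T}}\mathbf{P_{2/T}}\cdots\mathbf{P_{k/T}}-\pi_{k/T}\|_{TV}\le\|\pi_{k/T}-\pi_0\|_{TV}+\frac{(k+1)^2}{2T}.$$
   Context: Distributions are row vectors; $\|\mu-\nu\|_{TV}=\frac12\|\mu-\nu\|_1$. *)

(* Defs.v *)
From HB Require Import structures.
From mathcomp Require Import all_boot all_order all_algebra.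
From mathcomp Require Import reals.
Set Implicit Arguments. Unset Strict Implicit. Unset Printing Implicit Defensive.
Import Order.TTheory GRing.Theory Num.Theory.
Local Open Scope ring_scope.

Fixpoint mxpow (R : realType) (n : nat) (P : 'M[R]_n) (m : nat) : 'M[R]_n :=
  match m with
  | 0%N => 1%:M
  | m'.+1 => mxpow P m' *m P
  end.

Definition stochastic (R : realType) (n : nat) (P : 'M[R]_n) : Prop :=
  (forall i j, 0 <= P i j) /\ (forall i, \sum_j P i j = 1).

Definition irreducible (R : realType) (n : nat) (P : 'M[R]_n) : Prop :=
  forall i j, exists m : nat, 0 < mxpow P m i j.

Definition aperiodic (R : realType) (n : nat) (P : 'M[R]_n) : Prop :=
  forall i, forall d : nat,
    (forall m : nat, (0 < m)%N -> 0 < mxpow P m i i -> (d %| m)%N) -> d = 1%N.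

Definition distribution (R : realType) (n : nat) (mu : 'rV[R]_n) : Prop :=
  (forall j, 0 <= mu 0 j) /\ \sum_j mu 0 j = 1.

Definition stationary (R : realType) (n : nat) (P : 'M[R]_n) (pi : 'rV[R]_n)
  : Prop := distribution pi /\ pi *m P = pi.

Definition tv (R : realType) (n : nat) (mu nu : 'rV[R]_n) : R :=
  2^-1 * \sum_j `|mu 0 j - nu 0 j|.

Definition interp (R : realType) (n : nat) (P0 P1 : 'M[R]_n) (t : R) : 'M[R]_n :=
  (1 - t) *: P0 + t *: P1.

Fixpoint chain (R : realType) (n : nat) (P0 P1 : 'M[R]_n) (T : nat)
  (mu : 'rV[R]_n) (k : nat) : 'rV[R]_n :=
  match k with
  | 0%N => mu
  | k'.+1 => chain P0 P1 T mu k' *m interp P0 P1 (k%:R / T%:R)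
  end.

(* Main.v *)
Require Import Defs.
From HB Require Import structures.
From mathcomp Require Import all_boot all_order all_algebra.
From mathcomp Require Import reals.
From mathcomp Require Import ring lra.
Import Order.TTheory GRing.Theory Num.Theory.
Local Open Scope ring_scope.

Definition l1 (R : realType) (n : nat) (v : 'rV[R]_n) : R := \sum_j `|v 0 j|.
Arguments l1 {R n}.

Lemma l1_ge0 (R : realType) (n : nat) (v : 'rV[R]_n) : 0 <= l1 v.
Proof. by apply: sumr_ge0 => j _; exact: normr_ge0. Qed.

Lemma l1D {R : realType} {n : nat} (u v : 'rV[R]_n) : l1 (u + v) <= l1 u + l1 v.
Proof.
rewrite /l1 -big_split /=; apply: ler_sum => j _; rewrite mxE; exact: ler_normD.
Qed.

Lemma l1N {R : realType} {n : nat} (v : 'rV[R]_n) : l1 (- v) = l1 v.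
Proof. by rewrite /l1; apply: eq_bigr => j _; rewrite mxE normrN. Qed.

Lemma l1Z {R : realType} {n : nat} (a : R) (v : 'rV[R]_n) : l1 (a *: v) = `|a| * l1 v.
Proof. by rewrite /l1 mulr_sumr; apply: eq_bigr => j _; rewrite mxE normrM. Qed.

Lemma l1_mul {R : realType} {n : nat} {P : 'M[R]_n} (v : 'rV[R]_n) :
  stochastic P -> l1 (v *m P) <= l1 v.
Proof.
move=> [Pge0 Psum]; rewrite /l1.
apply: (@le_trans _ _ (\sum_j \sum_i `|v 0 i| * P i j)).
  apply: ler_sum => j _; rewrite mxE.
  apply: (le_trans (ler_norm_sum _ _ _)); apply: ler_sum => i _.
  by rewrite normrM (ger0_norm (Pge0 i j)).
rewrite exchange_big /=; apply: ler_sum => i _.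
by rewrite -mulr_sumr Psum mulr1.
Qed.

Lemma stoch_interp {R : realType} {n : nat} {P0 P1 : 'M[R]_n} {t : R} :
  stochastic P0 -> stochastic P1 -> 0 <= t <= 1 -> stochastic (interp P0 P1 t).
Proof.
move=> [g0 s0] [g1 s1] /andP[t0 t1]; split.
  move=> i j; rewrite /interp !mxE; apply: addr_ge0; apply: mulr_ge0 => //.
  by rewrite subr_ge0.
move=> i; rewrite /interp.
rewrite (eq_bigr (fun j => (1 - t) * P0 i j + t * P1 i j)); last first.
  by move=> j _; rewrite !mxE.
by rewrite big_split /= -!mulr_sumr s0 s1 !mulr1 subrK.
Qed.

Lemma tv_l1 (R : realType) (n : nat) (u v : 'rV[R]_n) : tv u v = 2^-1 * l1 (u - v).
Proof. by rewrite /tv /l1; congr (_ * _); apply: eq_bigr => j _; rewrite !mxE. Qed.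

Theorem proposition3 (R : realType) (n : nat) (P0 P1 : 'M[R]_n)
  (pi : R -> 'rV[R]_n) (T : nat)
  (hP0 : stochastic P0) (hP1 : stochastic P1)
  (hirr0 : irreducible P0) (hirr1 : irreducible P1)
  (hap0 : aperiodic P0) (hap1 : aperiodic P1)
  (hpi : forall t : R, 0 <= t <= 1 -> stationary (interp P0 P1 t) (pi t)) :
  forall k : nat, (1 <= k <= T)%N ->
    tv (chain P0 P1 T (pi 0) k) (pi (k%:R / T%:R))
      <= tv (pi (k%:R / T%:R)) (pi 0) + (k.+1)%:R ^+ 2 / (2 * T%:R).
Proof.
move=> k /andP[k1 kT].
have T0 : (0 < T)%N by apply: leq_trans kT.
have T0R : (0 : R) < T%:R by rewrite ltr0n.
have h01 : 0 <= (0:R) <= 1 by rewrite lexx ler01.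
have [[pi0ge pi0s] pi0st] := hpi 0 h01.
have interp0 : interp P0 P1 0 = P0 by rewrite /interp subr0 scale1r scale0r addr0.
rewrite interp0 in pi0st.
have l1pi0 : l1 (pi 0) = 1.
  by rewrite /l1 -pi0s; apply: eq_bigr => j _; rewrite ger0_norm.
set mu := chain P0 P1 T (pi 0).
have inv : forall j, (j <= T)%N ->
   l1 (mu j) <= 1 /\ l1 (mu j - pi 0) <= (j * j.+1)%:R / T%:R.
  elim=> [|j IH] jT.
    by rewrite /mu /= l1pi0 subrr /l1 big1 ?mul0r ?mul0n // => i _; rewrite mxE normr0.
  have [IH1 IH2] := IH (ltnW jT).
  set t : R := j.+1%:R / T%:R.
  have t01 : 0 <= t <= 1.
    rewrite /t divr_ge0 ?ler0n //= ler_pdivrMr // mul1r ler_nat //.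
  have st := stoch_interp hP0 hP1 t01.
  have muS : mu j.+1 = mu j *m interp P0 P1 t by [].
  split; first by rewrite muS; exact: le_trans (l1_mul _ st) IH1.
  have eq : mu j.+1 - pi 0 = (mu j - pi 0) *m P0 + t *: (mu j *m P1 - mu j *m P0).
    rewrite muS /interp mulmxDr -!scalemxAr mulmxBl pi0st scalerBl scale1r scalerBr.
    by rewrite addrA [LHS]addrAC [RHS]addrAC; congr (_ + _); exact: addrAC.
  rewrite eq; apply: (le_trans (l1D _ _)).
  rewrite l1Z ger0_norm; last by case/andP: t01.
  have h1 := l1_mul (mu j - pi 0) hP0.
  have h2 : l1 (mu j *m P1 - mu j *m P0) <= 2.
    apply: (le_trans (l1D _ _)); rewrite l1N.
    have := le_trans (l1_mul (mu j) hP1) IH1.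
    have := le_trans (l1_mul (mu j) hP0) IH1.
    lra.
  have tge : 0 <= t by case/andP: t01.
  apply: (@le_trans _ _ ((j * j.+1)%:R / T%:R + t * 2)).
    by apply: lerD; [exact: le_trans h1 IH2 | exact: ler_wpM2l].
  rewrite /t le_eqVlt; apply/orP; left; apply/eqP.
  rewrite !natrM -[j.+2]addn1 -[j.+1]addn1 !natrD; field.
  by rewrite gt_eqF.
have [_ Hk] := inv k kT.
rewrite !tv_l1.
have tri : mu k - pi (k%:R / T%:R) = (mu k - pi 0) + - (pi (k%:R / T%:R) - pi 0).
  by rewrite opprB addrA addrNK.
rewrite tri.
apply: (@le_trans _ _ (2^-1 * (l1 (mu k - pi 0) + l1 (pi (k%:R / T%:R) - pi 0)))).
  by apply: ler_wpM2l; [rewrite invr_ge0 ler0n| apply: (le_trans (l1D _ _)); rewrite l1N].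
rewrite mulrDr addrC; apply: lerD => //.
apply: (@le_trans _ _ (2^-1 * ((k * k.+1)%:R / T%:R))).
  by apply: ler_wpM2l => //; rewrite invr_ge0 ler0n.
have -> : 2^-1 * ((k * k.+1)%:R / T%:R) = (k * k.+1)%:R / (2 * T%:R) :> R.
  by field; rewrite gt_eqF.
rewrite ler_pM2r ?invr_gt0 ?mulr_gt0 //.
by rewrite expr2 -natrM ler_nat leq_mul2r ltnW ?orbT.
Qed.
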